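(* Let $X$ be an undirected graph and $f:Y\to X$ an object of $C_X$ such that $Y$ has no loops. Then for every $p>1$ and every $p$-cycle $h:c^p_U\to Y$ without backtracking, there exist an element $U\to X$ of $R^p_X$ (with distinguished cycle subgraph $c^p_U\subseteq U$) and a morphism $g:U\to Y$ of $C_X$ whose restriction to $c^p_U$ equals $h$.
   Context: An undirected graph has nodes $X(0)$, half-arcs $X(1)$, $s,t:X(1)\to X(0)$, and an involution $\iota$ with $s\circ\iota=t$; morphisms commute with $s,t,\iota$. An arc is a pair $\{u,\iota(u)\}$; a loop is an arc whose source and target coincide (including half-arcs fixed by $\iota$). For a node $x$, $X(x,* )$ is the set of arcs having $x$ as source or target. A morphism $f$ is a covering if for every node $x$ the induced map on arcs $X(x,* )\to Y(f_0(x),* )$ is bijective. $C_X$: objects are coverings $Y\to X$, morphisms are coverings $h:Y\to Z$ commuting with the maps to $X$. For $p\ge1$, $c^p_U$ has nodes $\mathbb{Z}/p\mathbb{Z}$ and half-arcs $[n]^\pm$ with $s([n]^+)=[n]$, $t([n]^+)=[n+1]$, $s([n]^-)=[n+1]$, $t([n]^-)=[n]$, $\iota([n]^+)=[n]^-$; a $p$-cycle of $Y$ is a morphism $h:c^p_U\to Y$, which has backtracking if $h_1([n+1]^+)=h_1([n]^-)$ for some $n$. $R^p_X$ is the set of objects $U\to X$ of $C_X$ such that $U$ is obtained by attaching a forest to a $p$-cycle: $U$ contains a subgraph isomorphic to $c^p_U$ and removing the arcs of this subgraph leaves a forest each of whose trees contains exactly one node of the cycle. *)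

(* Defs.v *)
From mathcomp Require Import all_boot.
From Stdlib Require Import Relations.
Set Implicit Arguments. Unset Strict Implicit. Unset Printing Implicit Defensive.

(* An undirected graph: nodes V = X(0), half-arcs H = X(1), s, t, involution iota
   with s o iota = t.  Node/half-arc sets are arbitrary types (possibly infinite). *)
Record graph := Graph {
  V : Type;
  H : Type;
  src : H -> V;
  tgt : H -> V;
  inv : H -> H;
  invK : forall u, inv (inv u) = u;
  src_inv : forall u, src (inv u) = tgt u
}.

Record hom (G K : graph) := Hom {
  hom0 : V G -> V K;
  hom1 : H G -> H K;
  hom_src : forall u, src (hom1 u) = hom0 (src u);
  hom_tgt : forall u, tgt (hom1 u) = hom0 (tgt u);
  hom_inv : forall u, inv (hom1 u) = hom1 (inv u)
}.

(* The arc {u, iota u} represented by u: v represents the same arc as u. *)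
Definition same_arc (G : graph) (u v : H G) : Prop := v = u \/ v = inv u.

Definition arc_at (G : graph) (x : V G) (u : H G) : Prop := src u = x \/ tgt u = x.

(* f is a covering: for each node x the induced map on arcs
   X(x, * ) -> Y(f0 x, * ), {u, iota u} |-> {f1 u, f1 (iota u)}, is bijective. *)
Definition is_covering (G K : graph) (f : hom G K) : Prop :=
  forall x : V G,
    (forall w, arc_at (hom0 f x) w ->
       exists u, arc_at x u /\ same_arc (hom1 f u) w) /\
    (forall u v, arc_at x u -> arc_at x v ->
       same_arc (hom1 f u) (hom1 f v) -> same_arc u v).

Definition has_no_loops (G : graph) : Prop := forall u : H G, src u <> tgt u.

(* The cycle graph c^p_U: nodes Z/pZ (= 'I_p with successor ordS),
   half-arcs [n]^+ = (n, true), [n]^- = (n, false). *)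
Definition cyc_src p (a : 'I_p * bool) : 'I_p :=
  if a.2 then a.1 else ordS a.1.
Definition cyc_tgt p (a : 'I_p * bool) : 'I_p :=
  if a.2 then ordS a.1 else a.1.
Definition cyc_inv p (a : 'I_p * bool) : 'I_p * bool := (a.1, ~~ a.2).

Lemma cyc_invK p (a : 'I_p * bool) : cyc_inv (cyc_inv a) = a.
Proof. by case: a => n b; rewrite /cyc_inv /= negbK. Qed.

Lemma cyc_src_inv p (a : 'I_p * bool) : cyc_src (cyc_inv a) = cyc_tgt a.
Proof. by case: a => n [] . Qed.

Definition cycle_graph (p : nat) : graph :=
  @Graph 'I_p ('I_p * bool) (@cyc_src p) (@cyc_tgt p) (@cyc_inv p)
         (@cyc_invK p) (@cyc_src_inv p).

Definition backtracking (p : nat) (Y : graph) (h : hom (cycle_graph p) Y) : Prop :=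
  exists n : 'I_p, hom1 h (ordS n, true) = hom1 h (n, false).

(* The subgraph of G with all nodes and the half-arcs satisfying P
   (P is closed under iota in our uses) is a forest: it has no loops
   and no p-cycle (p >= 1) without backtracking. *)
Definition forest_in (G : graph) (P : H G -> Prop) : Prop :=
  (forall u, P u -> src u <> tgt u) /\
  (forall (p : nat) (h : hom (cycle_graph p) G),
      0 < p -> (forall a, P (hom1 h a)) -> backtracking h).

Definition connected_in (G : graph) (P : H G -> Prop) : relation (V G) :=
  clos_refl_trans (V G) (fun a b => exists u, P u /\ src u = a /\ tgt u = b).

(* U -> X (via fU) lies in R^p_X with distinguished cycle e : c^p_U -> U:
   fU is a covering; e is injective on nodes and half-arcs (so its image is a
   subgraph isomorphic to c^p_U); removing the arcs of that subgraph leaves a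
   forest each of whose trees (connected components) contains exactly one
   node of the cycle. *)
Definition in_R_with (p : nat) (X U : graph) (fU : hom U X)
    (e : hom (cycle_graph p) U) : Prop :=
  is_covering fU /\
  injective (hom0 e) /\ injective (hom1 e) /\
  let P := fun u : H U => ~ (exists a, hom1 e a = u) in
  forest_in P /\
  (forall y : V U, exists! n : 'I_p, connected_in P (hom0 e n) y).

(* Main.v *)
Require Import Defs.
From mathcomp Require Import all_boot.
From Stdlib Require Import ProofIrrelevance Classical Relations.
Require Import Defs.
Set Implicit Arguments. Unset Strict Implicit.

Lemma tgt_inv (G : graph) (u : H G) : tgt (inv u) = src u.
Proof. by rewrite -src_inv invK. Qed.

Lemma sa_refl (G : graph) (u : H G) : same_arc u u.
Proof. by left. Qed.

Lemma sa_sym (G : graph) (u v : H G) : same_arc u v -> same_arc v u.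
Proof. by case=> ->; [left|right; rewrite invK]. Qed.

Lemma sa_trans (G : graph) (u v w : H G) :
  same_arc u v -> same_arc v w -> same_arc u w.
Proof.
rewrite /same_arc => [[->|->]] [->|->]; rewrite ?invK; tauto.
Qed.

Lemma sa_invl (G : graph) (u v : H G) : same_arc u v -> same_arc (inv u) v.
Proof. by rewrite /same_arc invK; tauto. Qed.

Lemma sa_hom (G K : graph) (g : hom G K) u v :
  same_arc u v -> same_arc (hom1 g u) (hom1 g v).
Proof. by case=> ->; [left|right; rewrite hom_inv]. Qed.

Lemma arc_at_hom (G K : graph) (g : hom G K) x u :
  arc_at x u -> arc_at (hom0 g x) (hom1 g u).
Proof. by case=> <-; [left; rewrite hom_src|right; rewrite hom_tgt]. Qed.

Definition comp (A B C : graph) (g : hom A B) (f : hom B C) : hom A C.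
Proof.
refine (@Hom A C (fun v => hom0 f (hom0 g v)) (fun u => hom1 f (hom1 g u)) _ _ _).
- by move=> u; rewrite hom_src hom_src.
- by move=> u; rewrite hom_tgt hom_tgt.
- by move=> u; rewrite hom_inv hom_inv.
Defined.

Lemma comp_cov (A B C : graph) (g : hom A B) (f : hom B C) :
  is_covering g -> is_covering f -> is_covering (comp g f).
Proof.
move=> cg cf x; split.
- move=> w /= hw.
  have [u' [hu' su']] := (proj1 (cf (hom0 g x))) w hw.
  have [u [hu su]] := (proj1 (cg x)) u' hu'.
  exists u; split => //.
  exact: sa_trans (sa_hom f su) su'.
- move=> u v hu hv /= s.
  apply: (proj2 (cg x)) => //.
  apply: (proj2 (cf (hom0 g x))) => //; exact: arc_at_hom.
Qed.

Lemma cov_src (G K : graph) (g : hom G K) :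
  has_no_loops K ->
  (forall x y, src y = hom0 g x -> exists u, src u = x /\ hom1 g u = y) ->
  (forall a b, src a = src b -> hom1 g a = hom1 g b -> a = b) ->
  is_covering g.
Proof.
move=> nl S I x; split.
- move=> w [hw|hw].
  + have [u [<- hu]] := S x w hw.
    by exists u; split; [left|left; rewrite hu].
  + have [u [<- hu]] := S x (inv w) (etrans (src_inv w) hw).
    by exists u; split; [left|right; rewrite hu invK].
- have norm : forall u, arc_at x u -> exists a, src a = x /\ same_arc u a.
    move=> u [hu|hu]; first by exists u; split => //; left.
    by exists (inv u); split; [rewrite src_inv|right].
  move=> u v hu hv s.
  have [a [sa ua]] := norm u hu.
  have [b [sb vb]] := norm v hv.
  have s' : same_arc (hom1 g a) (hom1 g b).
    apply: sa_trans (sa_hom g vb).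
    exact: sa_trans (sa_sym (sa_hom g ua)) s.
  case: s' => e.
  + have ab : a = b by apply: I; [rewrite sa sb|rewrite e].
    subst b. exact: sa_trans ua (sa_sym vb).
  + exfalso; apply: (nl (hom1 g a)).
    have E : src (hom1 g a) = src (hom1 g b) by rewrite !hom_src sa sb.
    by rewrite E e src_inv.
Qed.

Section Construction.
Variables (Y : graph) (p : nat) (h : hom (cycle_graph p) Y).

Definition endp (n : 'I_p) (w : seq (H Y)) : V Y :=
  match w with [::] => hom0 h n | u :: _ => tgt u end.
Definition noback (n : 'I_p) (w : seq (H Y)) (u : H Y) : Prop :=
  match w with
  | [::] => u <> hom1 h (n, true) /\ u <> hom1 h (ord_pred n, false)
  | u' :: _ => u <> inv u' end.
Fixpoint okw (n : 'I_p) (w : seq (H Y)) : Prop :=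
  match w with
  | [::] => True
  | u :: w' => okw n w' /\ src u = endp n w' /\ noback n w' u end.

Record node := Node { nid : 'I_p; nw : seq (H Y); nok : okw nid nw }.

Lemma node_eq (a b : node) : nid a = nid b -> nw a = nw b -> a = b.
Proof.
case: a => n w o; case: b => n' w' o' /= e1 e2; subst.
by rewrite (proof_irrelevance _ o o').
Qed.

Record tarc := TA { ta_n : 'I_p; ta_u : H Y; ta_w : seq (H Y);
  ta_ok : okw ta_n (ta_u :: ta_w); ta_d : bool }.

Lemma tarc_eq n u w o o' d : @TA n u w o d = @TA n u w o' d.
Proof. by rewrite (proof_irrelevance _ o o'). Qed.

Definition child (t : tarc) : node := Node (ta_ok t).
Definition parent (t : tarc) : node := Node (proj1 (ta_ok t)).
Definition root (n : 'I_p) : node := @Node n [::] I.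

Definition HU := (('I_p * bool) + tarc)%type.

Definition srcU (a : HU) : node :=
  match a with inl c => root (cyc_src c)
  | inr t => if ta_d t then parent t else child t end.
Definition tgtU (a : HU) : node :=
  match a with inl c => root (cyc_tgt c)
  | inr t => if ta_d t then child t else parent t end.
Definition flip (t : tarc) : tarc := TA (ta_ok t) (~~ ta_d t).
Definition invU (a : HU) : HU :=
  match a with inl c => inl (cyc_inv c) | inr t => inr (flip t) end.

Lemma invUK a : invU (invU a) = a.
Proof. by case: a => [c|[n u w o d]] /=; [rewrite cyc_invK|rewrite /flip /= negbK]. Qed.

Lemma srcU_inv a : srcU (invU a) = tgtU a.
Proof. by case: a => [c|[n u w o []]] //=; rewrite cyc_src_inv. Qed.

Definition UG : graph := @Graph node HU srcU tgtU invU invUK srcU_inv.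

Definition g0 (v : node) : V Y := endp (nid v) (nw v).
Definition g1 (a : HU) : H Y :=
  match a with inl c => hom1 h c
  | inr t => if ta_d t then ta_u t else inv (ta_u t) end.

Definition gH : hom UG Y.
Proof.
refine (@Hom UG Y g0 g1 _ _ _).
- case=> [c|[n u w o []]] /=.
  + by rewrite (hom_src h c).
  + by rewrite /g0 /= (proj1 (proj2 o)).
  + by rewrite src_inv.
- case=> [c|[n u w o []]] /=.
  + by rewrite (hom_tgt h c).
  + by [].
  + by rewrite tgt_inv /g0 /= (proj1 (proj2 o)).
- case=> [c|[n u w o []]] /=.
  + by rewrite (hom_inv h c).
  + by [].
  + by rewrite invK.
Defined.

Definition eH : hom (cycle_graph p) UG.
Proof.
by refine (@Hom (cycle_graph p) UG root (fun c => inl c) _ _ _).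
Defined.

End Construction.

Section Props.
Variables (Y : graph) (p : nat) (h : hom (cycle_graph p) Y).
Hypothesis nloop : has_no_loops Y.
Hypothesis nbt : ~ backtracking h.

Lemma ordSP (n : 'I_p) : ordS (ord_pred n) = n.
Proof. exact: ord_predK. Qed.

Lemma gH_cov : is_covering (gH h).
Proof.
apply: cov_src => //.
- case=> n w o y /= hy.
  case: w o hy => [|u' w'] o hy.
  + have [e1|ne1] := classic (y = hom1 h (n, true)).
      by exists (inl (n, true)); split => //; apply: node_eq.
    have [e2|ne2] := classic (y = hom1 h (ord_pred n, false)).
      exists (inl (ord_pred n, false)); split => //; apply: node_eq => /=; [exact: ordSP|by []].
    have o' : okw h n [:: y] by split => //; split => //; split.
    by exists (inr (@TA _ _ h n y [::] o' true)); split => //; apply: node_eq.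
  + have [e1|ne1] := classic (y = inv u').
      by exists (inr (@TA _ _ h n u' w' o false)); split => //.
    have o' : okw h n (y :: u' :: w') by split => //; split => //.
    by exists (inr (@TA _ _ h n y (u' :: w') o' true)); split => //; apply: node_eq.
- have nidE : forall a b : node h, a = b -> nid a = nid b by move=> a b ->.
  have nwE : forall a b : node h, a = b -> nw a = nw b by move=> a b ->.
  case=> [[m1 b1]|[n1 u1 w1 o1 d1]] [[m2 b2]|[n2 u2 w2 o2 d2]] E G.
  + move: (nidE _ _ E) G => /=; clear E; case: b1; case: b2 => e G; rewrite /cyc_src /= in e.
    * by subst.
    * by exfalso; apply: nbt; exists m2; rewrite -e.
    * by exfalso; apply: nbt; exists m1; rewrite e.
    * by move/ordS_inj: e => ->.
  + move: (nidE _ _ E) (nwE _ _ E) G; clear E; case: d2 => //= e1 e2 G.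
    subst w2; have [_ [_ [n1' n2']]] := o2.
    case: b1 e1 G => e1 G; rewrite /cyc_src /= in e1.
    * by subst; case: n1'.
    * by subst; case: n2'; rewrite ordSK.
  + move: (nidE _ _ E) (nwE _ _ E) G; clear E; case: d1 => //= e1 e2 G.
    subst w1; have [_ [_ [n1' n2']]] := o1.
    case: b2 e1 G => e1 G; rewrite /cyc_src /= in e1.
    * by subst; case: n1'.
    * by subst; case: n2'; rewrite ordSK.
  + move: (nidE _ _ E) (nwE _ _ E) G; clear E.
    case: d1 o1; case: d2 o2 => o2 o1 /= e1 e2 G; subst.
    * by rewrite (proof_irrelevance _ o1 o2).
    * by have [_ [_ /= ]] := o1; case.
    * by have [_ [_ /= ne]] := o2; case: ne.
    * move: e2 => [? ?]; subst; by rewrite (proof_irrelevance _ o1 o2).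
Qed.


Definition PU : H (UG h) -> Prop := fun u => ~ (exists a, hom1 (eH h) a = u).

Lemma P_inr u : PU u -> exists t, u = inr t.
Proof.
case: u => [c|t] Pu; last by exists t.
by exfalso; apply: Pu; exists c.
Qed.

Lemma forest_U : forest_in PU.
Proof.
split.
- move=> u /P_inr [[n u1 w1 o1 []] ->] /= E.
  + by move: (f_equal (fun v => size (nw v)) E) => /= /eqP; rewrite eqn_leq ltnn andbF.
  + by move: (f_equal (fun v => size (nw v)) E) => /= /eqP; rewrite eqn_leq ltnn.
- move=> p' k hp Pk.
  pose dep := fun i => size (nw (hom0 k i)).
  case: (@arg_maxnP _ (Ordinal hp) xpredT dep isT) => m _ mmax.
  exists (ord_pred m); rewrite (ord_predK m).
  have [t1 E1] := P_inr (Pk (m, true)).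
  have [t2 E2] := P_inr (Pk (ord_pred m, true)).
  have S1 := hom_src k (m, true); have T1 := hom_tgt k (m, true).
  have S2 := hom_src k (ord_pred m, true); have T2 := hom_tgt k (ord_pred m, true).
  rewrite E1 in S1 T1; rewrite E2 in S2 T2.
  rewrite -(hom_inv k (ord_pred m, true)) E1 E2.
  move: S1 T1 S2 T2; rewrite /= /cyc_tgt /cyc_src /= (ord_predK m).
  case: t1 E1 => n1 u1 w1 o1 [] E1 /= S1 T1.
    by move: (mmax (ordS m) isT); rewrite /dep -T1 -S1 /= ltnn.
  case: t2 E2 => n2 u2 w2 o2 [] E2 /= S2 T2; last first.
    by move: (mmax (ord_pred m) isT); rewrite /dep -T2 -S2 /= ltnn.
  rewrite -T2 in S1; move: S1 => /= [? ? ?]; subst.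
  by rewrite /flip /= (proof_irrelevance _ o1 o2).
Qed.

Lemma conn_nid a b : connected_in PU a b -> nid a = nid b.
Proof.
elim=> [x y [u [Pu [<- <-]]]|x|x y z _ IH1 _ IH2] //; last by rewrite IH1.
by have [[n u1 w1 o1 []] ->] := P_inr Pu.
Qed.

Lemma conn_root n w (o : okw h n w) : connected_in PU (root h n) (Node o).
Proof.
elim: w o => [|u w IH] o.
  by rewrite (proof_irrelevance _ o I); apply: rt_refl.
apply: rt_trans (IH (proj1 o)) _.
apply: rt_step; exists (inr (@TA _ _ h n u w o true)); split => //.
by case=> a.
Qed.

Lemma comp_U : forall y : node h, exists! n : 'I_p, connected_in PU (hom0 (eH h) n) y.
Proof.
case=> n w o; exists n; split; first exact: conn_root.
by move=> n' /conn_nid.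
Qed.

End Props.

Theorem proposition5p3 (X Y : graph) (f : hom Y X) :
  is_covering f -> has_no_loops Y ->
  forall (p : nat) (h : hom (cycle_graph p) Y),
    1 < p -> ~ backtracking h ->
    exists (U : graph) (fU : hom U X) (e : hom (cycle_graph p) U),
      in_R_with fU e /\
      exists g : hom U Y,
        is_covering g /\
        (forall v, hom0 f (hom0 g v) = hom0 fU v) /\
        (forall u, hom1 f (hom1 g u) = hom1 fU u) /\
        (forall n, hom0 g (hom0 e n) = hom0 h n) /\
        (forall a, hom1 g (hom1 e a) = hom1 h a).
Proof.
move=> cf nl p h hp nbt.
have cg := gH_cov nl nbt.
exists (UG h), (comp (gH h) f), (eH h); split; last first.
  by exists (gH h); split.
split; first exact: comp_cov.
split; first by move=> a b /(f_equal (@nid _ _ _)).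
split; first by move=> a b [].
split; first exact: forest_U.
exact: comp_U.
Qed.
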